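(* Let $G$ be a finite group and $f\in\mathrm{Aut}(G)$ such that $\mathrm{GAlex}(G,f)$ is connected. If $\mathrm{GAlex}(G,f)\cong\Lambda\times_\phi Q$ for some quandle $Q$, group $\Lambda$ and function $\phi:Q\times Q\to\Lambda$ with $|\Lambda|=|\mathrm{Fix}(G,f)|$, then $\Lambda\cong\mathrm{Fix}(G,f)$ as groups. Hence if $\mathrm{Fix}(G,f)$ is not abelian, then $\Lambda\times_\phi Q$ is not an abelian extension of $Q$.
   Context: A quandle is a set with operation $*$ satisfying $a*a=a$; unique right division; $(a*b)*c=(a*c)*(b*c)$. Connected means the group generated by the right translations $R_a(y)=y*a$ acts transitively. $\mathrm{GAlex}(G,f)$ is the quandle on $G$ with $a*b=f(ab^{-1})b$; $\mathrm{Fix}(G,f)=\{x\in G: f(x)=x\}$. For a group $\Lambda$ and $\phi:Q\times Q\to\Lambda$, $\Lambda\times_\phi Q$ is $\Lambda\times Q$ with $(\lambda,a)*(\mu,b)=(\lambda\phi(a,b),a*b)$, assumed to be a quandle; it is called an abelian extension of $Q$ when $\Lambda$ is abelian. *)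

(* Defs.v *)
From HB Require Import structures.
From mathcomp Require Import all_boot all_order all_fingroup.
From Stdlib Require Import Relations.
Set Implicit Arguments. Unset Strict Implicit. Unset Printing Implicit Defensive.

Definition is_quandle (T : Type) (op : T -> T -> T) : Prop :=
  [/\ (forall a, op a a = a),
      (forall a b, exists! c, op c a = b)
    & (forall a b c, op (op a b) c = op (op a c) (op b c))].

(* One step of the action of a generator R_a^{+-1} of the group generated by
   the right translations R_a(y) = y * a:  y = R_a x  or  x = R_a y
   (the latter meaning y = R_a^{-1} x). *)
Definition rtrans_step (T : Type) (op : T -> T -> T) (x y : T) : Prop :=
  exists a, op x a = y \/ op y a = x.

(* Connected: the group generated by the right translations acts transitively,
   i.e. every y is obtained from every x by a finite word in the R_a^{+-1}. *)
Definition quandle_connected (T : Type) (op : T -> T -> T) : Prop :=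
  forall x y, clos_refl_trans T (rtrans_step op) x y.

Local Open Scope group_scope.

Definition galex_op (gT : finGroupType) (f : gT -> gT) (a b : gT) : gT :=
  f (a * b^-1) * b.

Definition Fix_set (gT : finGroupType) (f : gT -> gT) : {set gT} :=
  [set x | f x == x].

Definition ext_op (lT : finGroupType) (Q : Type) (opQ : Q -> Q -> Q)
  (phi : Q -> Q -> lT) (x y : lT * Q) : lT * Q :=
  (x.1 * phi x.2 y.2, opQ x.2 y.2).

Definition quandle_iso (A B : Type) (opA : A -> A -> A) (opB : B -> B -> B)
  (h : A -> B) : Prop :=
  bijective h /\ forall a b, h (opA a b) = opB (h a) (h b).

(* Main.v *)
Require Import Defs.
From mathcomp Require Import all_boot all_order all_fingroup.
From Stdlib Require Import Relations.
Set Implicit Arguments. Unset Strict Implicit. Unset Printing Implicit Defensive.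
Local Open Scope group_scope.

Section Aux.
Variables (gT : finGroupType) (f : {perm gT}).
Hypothesis fM : {in [set: gT] &, {morph f : x y / x * y}}.

Lemma fMt x y : f (x * y) = f x * f y.
Proof. by apply: fM; rewrite inE. Qed.

Lemma f1 : f 1 = 1.
Proof. by apply: (mulgI (f 1)); rewrite -fMt !mulg1. Qed.

Lemma galexL z x a : f z = z -> galex_op f (z * x) a = z * galex_op f x a.
Proof. by move=> Hz; rewrite /galex_op -mulgA fMt Hz mulgA. Qed.

Lemma galex_inj a u v : galex_op f u a = galex_op f v a -> u = v.
Proof. by rewrite /galex_op => /mulIg /perm_inj /mulIg. Qed.

Lemma centr_lemma (Hconn : quandle_connected (galex_op f)) (s : gT -> gT) :
  (forall x b, s (galex_op f x b) = galex_op f (s x) b) ->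
  f (s 1) = s 1 /\ forall x, s x = s 1 * x.
Proof.
move=> Hs.
have Hz : f (s 1) = s 1.
  have e : galex_op f 1 1 = 1 by rewrite /galex_op invg1 !mulg1 f1.
  by rewrite -{2}e Hs /galex_op invg1 !mulg1.
split=> // x0.
have Hgen : forall u v, clos_refl_trans gT (rtrans_step (galex_op f)) u v ->
    s u = s 1 * u -> s v = s 1 * v.
  move=> u v H; elim: H => {u v} [x y [a [Ha|Ha]] Px|x|x y w _ IH1 _ IH2 Px] //.
  - by rewrite -Ha Hs Px galexL.
  - apply: (@galex_inj a); rewrite galexL // -Hs Ha; exact: Px.
  - exact: IH2 (IH1 Px).
apply: (Hgen 1 x0); [exact: Hconn | by rewrite mulg1].
Qed.
End Aux.

Theorem mainTheorem15 (gT : finGroupType) (f : {perm gT})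
  (Hf : f \in Aut [set: gT])
  (Hconn : quandle_connected (galex_op f))
  (lT : finGroupType) (Q : Type) (opQ : Q -> Q -> Q) (phi : Q -> Q -> lT)
  (HQ : is_quandle opQ) (Hext : is_quandle (ext_op opQ phi))
  (h : gT -> lT * Q) (Hh : quandle_iso (galex_op f) (ext_op opQ phi) h)
  (Hcard : #|[set: lT]| = #|Fix_set f|) :
  (Fix_set f \isog [set: lT])
  /\ (~~ abelian (Fix_set f) -> ~~ abelian [set: lT]).
Proof.
have fM : {in [set: gT] &, {morph f : x y / x * y}}.
  by apply/morphicP; apply: Aut_morphic.
case: Hh => [[g hK gK] hM].
pose sig (m : lT) (x : gT) := g (m * (h x).1, (h x).2).
have hsig m x : h (sig m x) = (m * (h x).1, (h x).2) by rewrite /sig gK.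
have Hsig m x b : sig m (galex_op f x b) = galex_op f (sig m x) b.
  apply: (can_inj hK); rewrite hsig !hM hsig /ext_op /=.
  by rewrite mulgA.
pose zm m := sig m 1.
have zfix m : f (zm m) = zm m by case: (centr_lemma fM Hconn (Hsig m)).
have zL m x : sig m x = zm m * x by case: (centr_lemma fM Hconn (Hsig m)).
have zM : {in [set: lT] &, {morph zm : m n / m * n}}.
  move=> m n _ _; rewrite -zL /zm; congr g; rewrite hsig /=.
  by rewrite mulgA.
have zinj : injective zm.
  move=> m n /(congr1 h); rewrite /zm !hsig => [[e]].
  exact: mulIg e.
have gFix : group_set (Fix_set f).
  apply/group_setP; split; first by rewrite /Fix_set inE (f1 fM).
  by move=> x y; rewrite /Fix_set !inE => /eqP Hx /eqP Hy; rewrite (fMt fM) Hx Hy.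
pose FixG := Group gFix.
pose zmor := @Morphism _ _ [set: lT] zm zM.
have Hinj : 'injm zmor by apply/injmP => x y _ _; exact: zinj.
have Him : zmor @* [set: lT] = FixG.
  apply/eqP; rewrite eqEcard card_injm // Hcard /= leqnn andbT.
  apply/subsetP => y /morphimP [m _ _ ->]; rewrite /= /Fix_set inE; exact/eqP/zfix.
have iso : [set: lT]%G \isog FixG.
  by apply/isogP; exists zmor.
have iso' : FixG \isog [set: lT]%G by rewrite isog_sym.
split; first exact: iso'.
by rewrite (isog_abelian iso').
Qed.
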